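(* Let $K$ be a finite simplicial complex, $N\subseteq K$ closed, and $\mathcal V_1,\mathcal V_2$ multivector fields on $K$ with $\mathcal V_2\sqsubseteq\mathcal V_1$. Let $M_1$ be an isolated invariant set under $\mathcal V_1$ isolated by $N$, and let $M_2$ be a minimal Morse set in $N$ under $\mathcal V_2$ (an isolated invariant set under $\mathcal V_2$, isolated by $N$, which is minimal). If $M_1\cap M_2\neq\emptyset$, then $M_2\subseteq M_1$.
   Context: $\sigma\le\tau$ means $\sigma$ is a face of $\tau$; $\mathrm{cl}(A)$ is the set of faces of simplices in $A$; $A$ is closed if $A=\mathrm{cl}(A)$. A multivector is a convex subset of $K$ w.r.t. $\le$; a multivector field $\mathcal V$ is a partition of $K$ into multivectors; $[\sigma]_{\mathcal V}$ is the multivector containing $\sigma$. $\mathcal V_2\sqsubseteq\mathcal V_1$ means each multivector of $\mathcal V_2$ is contained in one of $\mathcal V_1$. $F_{\mathcal V}(\sigma)=[\sigma]_{\mathcal V}\cup\mathrm{cl}(\sigma)$. A path is a finite sequence $\sigma_0,\dots,\sigma_m$ with $\sigma_j\in F_{\mathcal V}(\sigma_{j-1})$; a solution is a bi-infinite such sequence. A multivector $V$ is critical if $H_k(\mathrm{cl}(V),\mathrm{cl}(V)\setminus V)\neq0$ for some $k$ (coefficients in a finite field), regular otherwise. A solution $\rho:\mathbb Z\to K$ is essential if for each $i$ with $[\rho(i)]_{\mathcal V}$ regular there exist $i^-<i<i^+$ with $[\rho(i^-)]_{\mathcal V}\ne[\rho(i)]_{\mathcal V}\ne[\rho(i^+)]_{\mathcal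 V}$. $\mathrm{inv}_{\mathcal V}(A)$ is the set of $\sigma\in A$ that lie on some essential solution with image in $A$; $S$ is invariant if $\mathrm{inv}_{\mathcal V}(S)=S$. An invariant set $S$ is isolated by the closed set $N$ if $S$ is a union of multivectors of $\mathcal V$ and every path $\rho:\mathbb Z\cap[a,b]\to N$ with $\rho(a),\rho(b)\in S$ has image in $S$. A Morse decomposition of $S$ indexed by a finite poset $\mathbb P$ is a family $\{M_p\}$ of mutually disjoint isolated invariant subsets of $S$ such that every essential solution $\rho$ in $S$ either has image in a single $M_r$ or satisfies $\alpha(\rho)\subseteq M_q$, $\omega(\rho)\subseteq M_p$ with $q>p$ ($\alpha(\rho)=\bigcap_{i\ge1}\rho((-\infty,-i])$, $\omega(\rho)=\bigcap_{i\ge1}\rho([i,\infty))$). $S$ is minimal if its only Morse decomposition is $\{S\}$. *)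

(* Defs.v *)
From HB Require Import structures.
From mathcomp Require Import all_boot all_order all_algebra.
Set Implicit Arguments. Unset Strict Implicit. Unset Printing Implicit Defensive.
Import Order.TTheory GRing.Theory Num.Theory.

(* Abstract finite simplicial complexes on a finite vertex type Vx.
   A simplex is a nonempty finite set of vertices; the face relation is
   set inclusion. *)
Section Defs.
Variable Vx : finType.
Notation simplex := {set Vx}.
Notation cplx := {set {set Vx}}.

Definition is_complex (K : cplx) : Prop :=
  set0 \notin K /\
  forall s t : simplex, s \in K -> t \subset s -> t != set0 -> t \in K.

Definition cl (K A : cplx) : cplx :=
  [set t in K | [exists s in A, t \subset s]].

Definition is_closed (K A : cplx) : Prop := A \subset K /\ cl K A = A.

Definition convex (K A : cplx) : Prop :=
  forall s r t, s \in A -> t \in A -> r \in K -> s \subset r -> r \subset t ->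
    r \in A.

Definition mvf (K : cplx) (mV : {set cplx}) : Prop :=
  partition mV K /\ forall A, A \in mV -> convex K A.

Definition mv (mV : {set cplx}) (s : simplex) : cplx := pblock mV s.

Definition refines (mV2 mV1 : {set cplx}) : Prop :=
  forall A, A \in mV2 -> exists2 B, B \in mV1 & A \subset B.

Definition Fv (K : cplx) (mV : {set cplx}) (s : simplex) : cplx :=
  mv mV s :|: cl K [set s].

(* ---------- relative simplicial homology H_k(cl A, cl A \ A; F) ----------
   The relative chain complex of the pair (cl A, cl A \ A) has as basis in
   degree k the k-simplices (k+1 vertices) of A, and the boundary is the
   usual simplicial boundary followed by the projection killing faces
   outside A.  Vertices are ordered by enum_rank; chains are row vectors
   indexed by all vertex sets, and bd A k is the matrix of the boundary
   C_k -> C_{k-1}. *)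
Definition vsign (F : nzRingType) (s t : simplex) : F :=
  ((-1) ^+ (\sum_(v in s :\: t) #|[set u in s | enum_rank u < enum_rank v]|)%N)%R.

Definition bd (F : nzRingType) (A : cplx) (k : nat) : 'M[F]_(#|{: simplex}|) :=
  \matrix_(i, j)
    let s := enum_val i in let t := enum_val j in
    if [&& s \in A, t \in A, #|s| == k.+1, t \subset s & #|t| == k]
    then vsign F s t else 0%R.

Definition nsimp (A : cplx) (k : nat) : nat := #|[set s in A | #|s| == k.+1]|.

(* dim H_k = dim ker bd_k - dim im bd_{k+1}
           = nsimp k - rank bd_k - rank bd_{k+1};
   H_k <> 0 iff this is positive. *)
Definition relH_nonzero (F : fieldType) (A : cplx) (k : nat) : Prop :=
  (\rank (bd F A k) + \rank (bd F A k.+1) < nsimp A k)%N.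

Definition critical (F : fieldType) (A : cplx) : Prop :=
  exists k, relH_nonzero F A k.

Definition regular (F : fieldType) (A : cplx) : Prop := ~ critical F A.

Definition is_solution (K : cplx) (mV : {set cplx}) (rho : int -> simplex) : Prop :=
  forall i : int, rho (i + 1)%R \in Fv K mV (rho i).

Definition essential (F : fieldType) (K : cplx) (mV : {set cplx})
    (rho : int -> simplex) : Prop :=
  is_solution K mV rho /\
  forall i : int, regular F (mv mV (rho i)) ->
    (exists2 im : int, (im < i)%R & mv mV (rho im) != mv mV (rho i)) /\
    (exists2 ip : int, (i < ip)%R & mv mV (rho ip) != mv mV (rho i)).

Definition image_in (rho : int -> simplex) (A : cplx) : Prop :=
  forall i, rho i \in A.

(* inv_V(A) as a predicate on simplices (membership is not decidable
   constructively, so it is a Prop-valued set). *)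
Definition in_inv (F : fieldType) (K : cplx) (mV : {set cplx}) (A : cplx)
    (s : simplex) : Prop :=
  s \in A /\ exists rho, [/\ essential F K mV rho, image_in rho A &
                                    exists i, rho i = s].

Definition invariant (F : fieldType) (K : cplx) (mV : {set cplx}) (S : cplx) : Prop :=
  forall s, in_inv F K mV S s <-> s \in S.

Definition fpath (K : cplx) (mV : {set cplx}) (x : simplex) (p : seq simplex) : bool :=
  path (fun a b => b \in Fv K mV a) x p.

Definition isolated_by (F : fieldType) (K : cplx) (mV : {set cplx}) (S N : cplx) : Prop :=
  [/\ invariant F K mV S, is_closed K N, S \subset N,
      (forall s, s \in S -> mv mV s \subset S) &
      (forall x p, fpath K mV x p -> all (mem N) (x :: p) ->
         x \in S -> last x p \in S -> all (mem S) (x :: p))].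

Definition isolated_invariant (F : fieldType) (K : cplx) (mV : {set cplx}) (S : cplx) : Prop :=
  exists N, isolated_by F K mV S N.

Definition alpha (rho : int -> simplex) (s : simplex) : Prop :=
  forall i : nat, (0 < i)%N -> exists2 j : int, (j <= - (i%:Z))%R & rho j = s.
Definition omega (rho : int -> simplex) (s : simplex) : Prop :=
  forall i : nat, (0 < i)%N -> exists2 j : int, (i%:Z <= j)%R & rho j = s.

(* Morse decomposition of S indexed by a finite poset ('I_n, lt),
   lt the strict order; "q > p" is lt p q. *)
Definition morse_decomposition (F : fieldType) (K : cplx) (mV : {set cplx}) (S : cplx)
    (n : nat) (lt : rel 'I_n) (M : 'I_n -> cplx) : Prop :=
  [/\ irreflexive lt, transitive lt,
      (forall p q, p != q -> [disjoint M p & M q]),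
      (forall p, M p \subset S /\ isolated_invariant F K mV (M p)) &
      (forall rho, essential F K mV rho -> image_in rho S ->
         (exists r, image_in rho (M r)) \/
         (exists p q, [/\ lt p q, (forall s, alpha rho s -> s \in M q) &
                                  (forall s, omega rho s -> s \in M p)]))].

(* S is minimal: its only Morse decomposition is {S}, i.e. in every Morse
   decomposition each Morse set is S itself or empty. *)
Definition minimal (F : fieldType) (K : cplx) (mV : {set cplx}) (S : cplx) : Prop :=
  forall n (lt : rel 'I_n) (M : 'I_n -> cplx),
    morse_decomposition F K mV S lt M -> forall p, M p = S \/ M p = set0.

End Defs.

(* Main.v *)
Require Import Defs.
From HB Require Import structures.
From mathcomp Require Import all_boot all_order all_algebra zify.
From Stdlib Require Import ClassicalEpsilon Classical.
Set Implicit Arguments. Unset Strict Implicit. Unset Printing Implicit Defensive.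
Import Order.TTheory GRing.Theory Num.Theory.
Local Open Scope ring_scope.
Section Aux.
Variables (F : fieldType) (Vx : finType) (K : {set {set Vx}}) (V : {set {set {set Vx}}}).

Lemma loop_inv (rho : int -> {set Vx}) (T : {set {set Vx}}) (j : int) (L : nat) :
  is_solution K V rho -> (0 < L)%N -> rho (j + L%:Z) = rho j ->
  (forall n, (n < L)%N -> rho (j + n%:Z) \in T) ->
  (forall n, (n < L)%N -> regular F (mv V (rho (j + n%:Z))) ->
     exists2 n', (n' < L)%N & mv V (rho (j + n'%:Z)) != mv V (rho (j + n%:Z))) ->
  in_inv F K V T (rho j).
Proof.
move=> sol L0 per inT reg.
have Lz : 0 < L%:Z by rewrite ltz_nat.
have modnat : forall k : int, exists2 r : nat, (k %% L)%Z = r%:Z & (r < L)%N.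
  move=> k; have h0 := modz_ge0 k (lt0r_neq0 Lz); have h1 := ltz_pmod k Lz.
  case E: (k %% L)%Z h0 h1 => [r|r] //= _; rewrite ltz_nat => h1; by exists r.
pose sig k := rho (j + (k %% L)%Z).
have ins := inT 0%N L0; rewrite addr0 in ins.
split => //; exists sig; split.
- split.
  + move=> k; rewrite /sig.
    have [r Er rL] := modnat k.
    have E1 : ((k + 1) %% L)%Z = ((r%:Z + 1) %% L)%Z by rewrite -Er modzDml.
    rewrite E1 Er; have := sol (j + r%:Z).
    have -> : r%:Z + 1 = r.+1%:Z by lia.
    case: (ltnP r.+1 L) => h.
    * rewrite modz_small; last by apply/andP; split; [|rewrite ltz_nat].
      by have -> : j + r%:Z + 1 = j + r.+1%:Z by lia.
    * have e : r.+1 = L by lia.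
      rewrite e modzz addr0 -per.
      by have -> : j + r%:Z + 1 = j + L%:Z by lia.
  + move=> k; rewrite /sig; have [r Er rL] := modnat k; rewrite Er => hreg.
    have [n' n'L hn'] := reg r rL hreg.
    have ek := divz_eq k L; rewrite Er in ek.
    split.
    * exists (((k %/ L)%Z - 1) * L%:Z + n'%:Z).
        rewrite {2}ek; lia.
      rewrite modzMDl modz_small //; apply/andP; split => //; by rewrite ltz_nat.
    * exists (((k %/ L)%Z + 1) * L%:Z + n'%:Z).
        rewrite {1}ek; lia.
      rewrite modzMDl modz_small //; apply/andP; split => //; by rewrite ltz_nat.
- move=> k; rewrite /sig; have [r Er rL] := modnat k; rewrite Er; exact: inT.
- by exists 0; rewrite /sig mod0z addr0.
Qed.
Lemma alpha_inv (rho : int -> {set Vx}) (T : {set {set Vx}}) (m : int) s :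
  essential F K V rho -> (forall k, k <= m -> rho k \in T) -> alpha rho s ->
  in_inv F K V T s.
Proof.
move=> [sol ess] inT al.
have occ : forall b : int, exists2 j, j <= b & rho j = s.
  move=> b; have [j hj e] := al (`|b|.+1) (ltn0Sn _).
  exists j => //; lia.
case: (classic (exists2 m', m' <= m & forall k, k <= m' -> mv V (rho k) = mv V (rho m'))).
- move=> [m' hm' hc].
  have crit : ~ regular F (mv V (rho m')).
    move=> r; have [[im him hne] _] := ess m' r.
    by rewrite hc ?eqxx in hne; [|lia].
  have [j' hj' ej'] := occ m'.
  have [j hj ej] := occ (j' - 1).
  rewrite -ej; apply: (@loop_inv _ _ j `|j' - j|%N sol).
  + lia.
  + have -> : j + (`|j' - j|%N)%:Z = j' by lia.
    by rewrite ej ej'.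
  + move=> n hn; apply: inT; lia.
  + move=> n hn; rewrite hc; [by move=> /crit|lia].
- move=> nex.
  have hB : forall m', m' <= m -> exists2 k, k <= m' & mv V (rho k) != mv V (rho m').
    move=> m' hm'; apply: NNPP => hn; apply: nex; exists m' => // k hk.
    apply: NNPP => hk2; apply: hn; exists k => //; by apply/eqP.
  have [j' hj' ej'] := occ m.
  have [k hk hne] := hB j' hj'.
  have kj' : k < j'.
    rewrite lt_neqAle hk andbT; apply/negP => /eqP ekj; by rewrite ekj eqxx in hne.
  have [j hj ej] := occ k.
  rewrite -ej; apply: (@loop_inv _ _ j `|j' - j|%N sol).
  + lia.
  + have -> : j + (`|j' - j|%N)%:Z = j' by lia.
    by rewrite ej ej'.
  + move=> n hn; apply: inT; lia.
  + move=> n hn _.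
    case: (eqVneq (mv V (rho k)) (mv V (rho (j + n%:Z)))) => he.
    * exists 0%N; first lia.
      by rewrite addr0 -he ej -ej' eq_sym.
    * exists `|k - j|%N; first lia.
      have -> : j + (`|k - j|%N)%:Z = k by lia.
      by [].
Qed.

Lemma omega_inv (rho : int -> {set Vx}) (T : {set {set Vx}}) (m : int) s :
  essential F K V rho -> (forall k, m <= k -> rho k \in T) -> omega rho s ->
  in_inv F K V T s.
Proof.
move=> [sol ess] inT om.
have occ : forall b : int, exists2 j, b <= j & rho j = s.
  move=> b; have [j hj e] := om (`|b|.+1) (ltn0Sn _).
  exists j => //; lia.
case: (classic (exists2 m', m <= m' & forall k, m' <= k -> mv V (rho k) = mv V (rho m'))).
- move=> [m' hm' hc].
  have crit : ~ regular F (mv V (rho m')).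
    move=> r; have [_ [ip hip hne]] := ess m' r.
    by rewrite hc ?eqxx in hne; [|lia].
  have [j hj ej] := occ m'.
  have [j' hj' ej'] := occ (j + 1).
  rewrite -ej; apply: (@loop_inv _ _ j `|j' - j|%N sol).
  + lia.
  + have -> : j + (`|j' - j|%N)%:Z = j' by lia.
    by rewrite ej ej'.
  + move=> n hn; apply: inT; lia.
  + move=> n hn; rewrite hc; [by move=> /crit|lia].
- move=> nex.
  have hB : forall m', m <= m' -> exists2 k, m' <= k & mv V (rho k) != mv V (rho m').
    move=> m' hm'; apply: NNPP => hn; apply: nex; exists m' => // k hk.
    apply: NNPP => hk2; apply: hn; exists k => //; by apply/eqP.
  have [j hj ej] := occ m.
  have [k hk hne] := hB j hj.
  have kj : j < k.
    rewrite lt_neqAle hk andbT; apply/negP => /eqP ekj; by rewrite ekj eqxx in hne.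
  have [j' hj' ej'] := occ (k + 1).
  rewrite -ej; apply: (@loop_inv _ _ j `|j' - j|%N sol).
  + lia.
  + have -> : j + (`|j' - j|%N)%:Z = j' by lia.
    by rewrite ej ej'.
  + move=> n hn; apply: inT; lia.
  + move=> n hn _.
    case: (eqVneq (mv V (rho k)) (mv V (rho (j + n%:Z)))) => he.
    * exists 0%N; first lia.
      by rewrite addr0 -he eq_sym.
    * exists `|k - j|%N; first lia.
      have -> : j + (`|k - j|%N)%:Z = k by lia.
      by [].
Qed.
Lemma fwd_closed (M C : {set {set Vx}}) rho :
  (forall s t, s \in C -> t \in M -> t \in Fv K V s -> t \in C) ->
  is_solution K V rho -> image_in rho M ->
  forall k k', k <= k' -> rho k \in C -> rho k' \in C.
Proof.
move=> fc sol im k k' le hk.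
have h : forall n : nat, rho (k + n%:Z) \in C.
  elim => [|n IH]; first by rewrite addr0.
  have -> : k + n.+1%:Z = k + n%:Z + 1 by lia.
  exact: fc IH (im _) (sol _).
have -> : k' = k + (`|k' - k|%N)%:Z by lia.
exact: h.
Qed.

Lemma alpha_exists (rho : int -> {set Vx}) : exists s, alpha rho s.
Proof.
apply: NNPP => H.
have nal : forall s, exists i : nat, forall j, j <= - i%:Z -> rho j != s.
  move=> s; apply: NNPP => h; apply: H; exists s => i hi; apply: NNPP => h2.
  apply: h; exists i => j hj; apply/eqP => e; apply: h2; by exists j.
have bound : forall l : seq {set Vx}, exists I : nat,
    forall s, s \in l -> forall j, j <= - I%:Z -> rho j != s.
  elim => [|a l [I HI]]; first by exists 0%N.
  have [i Hi] := nal a; exists (maxn I i) => s; rewrite inE => /orP [/eqP -> | sl] j hj.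
  + apply: Hi; lia.
  + apply: (HI s sl); lia.
have [I HI] := bound (enum {: {set Vx}}).
have hm : rho (- I%:Z) \in enum {: {set Vx}} by rewrite mem_enum.
by have /eqP := HI _ hm (- I%:Z) (lexx _).
Qed.

Lemma omega_exists (rho : int -> {set Vx}) : exists s, omega rho s.
Proof.
apply: NNPP => H.
have nal : forall s, exists i : nat, forall j, i%:Z <= j -> rho j != s.
  move=> s; apply: NNPP => h; apply: H; exists s => i hi; apply: NNPP => h2.
  apply: h; exists i => j hj; apply/eqP => e; apply: h2; by exists j.
have bound : forall l : seq {set Vx}, exists I : nat,
    forall s, s \in l -> forall j, I%:Z <= j -> rho j != s.
  elim => [|a l [I HI]]; first by exists 0%N.
  have [i Hi] := nal a; exists (maxn I i) => s; rewrite inE => /orP [/eqP -> | sl] j hj.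
  + apply: Hi; lia.
  + apply: (HI s sl); lia.
have [I HI] := bound (enum {: {set Vx}}).
have hm : rho I%:Z \in enum {: {set Vx}} by rewrite mem_enum.
by have /eqP := HI _ hm I%:Z (lexx _).
Qed.

Lemma glue (T : {set {set Vx}}) x p :
  Defs.fpath K V x p -> all (mem T) (x :: p) ->
  in_inv F K V T x -> in_inv F K V T (last x p) ->
  forall z, z \in x :: p -> in_inv F K V T z.
Proof.
move=> fp allT [xT [r1 [[s1 e1] im1 [i1 ei1]]]] [yT [r2 [[s2 e2] im2 [i2 ei2]]]] z zin.
set n := size p; set q := x :: p.
pose sig (k : int) := if k <= 0 then r1 (i1 + k) else if k <= n%:Z then nth x q `|k|%N
              else r2 (i2 + (k - n%:Z)).
have S1 : forall k : int, k <= 0 -> sig k = r1 (i1 + k) by move=> k hk; rewrite /sig hk.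
have S2 : forall a : nat, (a <= n)%N -> sig a%:Z = nth x q a.
  move=> a ha; case: a ha => [|a] ha; first by rewrite S1 // addr0 ei1.
  rewrite /sig; case: ifP => h2 //; move/negbT: h2; lia.
have S3 : forall k : int, n%:Z <= k -> sig k = r2 (i2 + (k - n%:Z)).
  move=> k hk; have [hk2|hk2] := boolP (k <= n%:Z).
  - have -> : k = n%:Z by lia.
    rewrite S2 // subrr addr0 ei2 /q /n; exact: (esym (last_nth _ _ _)).
  - rewrite /sig; case: ifP => h1; first lia.
    case: ifP => h2 //; lia.
have allq : forall a : nat, (a <= n)%N -> nth x q a \in T.
  move=> a ha; have := allP allT (nth x q a) (mem_nth _ _); apply; by rewrite /= ltnS.
have sol : is_solution K V sig.
  move=> k; have [hk0|hk0] := boolP (k + 1 <= 0).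
  - rewrite S1; last lia.
    rewrite S1; last lia.
    rewrite addrA; exact: s1.
  have [hkn|hkn] := boolP (k + 1 <= n%:Z).
  - have [a ea] : exists a : nat, k = a%:Z by exists `|k|%N; lia.
    subst k; have -> : a%:Z + 1 = a.+1%:Z by lia.
    rewrite S2; last lia.
    rewrite S2; last lia.
    have := (pathP x fp) a; rewrite /= => h; apply: h; lia.
  - rewrite S3; last lia.
    rewrite S3; last lia.
    have -> : i2 + (k + 1 - n%:Z) = i2 + (k - n%:Z) + 1 by lia.
    exact: s2.
split; first exact: (allP allT z zin).
exists sig; split; [split => //| |].
- move=> k hreg; split.
  + have [hk0|hk0] := boolP (k <= 0).
    * rewrite S1 // in hreg *; have [[im him hne] _] := e1 _ hreg.
      exists (im - i1); first lia.
      rewrite S1; last lia.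
      have -> : i1 + (im - i1) = im by lia.
      exact: hne.
    * case: (eqVneq (mv V x) (mv V (sig k))) => he.
      - rewrite -he -ei1 in hreg *; have [[im him hne] _] := e1 _ hreg.
        exists (im - i1); first lia.
        rewrite S1; last lia.
        have -> : i1 + (im - i1) = im by lia.
        exact: hne.
      - exists 0; first lia.
        by rewrite S1 // addr0 ei1.
  + have [hkn|hkn] := boolP (n%:Z <= k).
    * rewrite S3 // in hreg *; have [_ [ip hip hne]] := e2 _ hreg.
      exists (ip - i2 + n%:Z); first lia.
      rewrite S3; last lia.
      have -> : i2 + (ip - i2 + n%:Z - n%:Z) = ip by lia.
      exact: hne.
    * case: (eqVneq (mv V (last x p)) (mv V (sig k))) => he.
      - rewrite -he -ei2 in hreg *; have [_ [ip hip hne]] := e2 _ hreg.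
        exists (ip - i2 + n%:Z); first lia.
        rewrite S3; last lia.
        have -> : i2 + (ip - i2 + n%:Z - n%:Z) = ip by lia.
        exact: hne.
      - exists n%:Z; first lia.
        by rewrite S3 // subrr addr0 ei2.
- move=> k; have [hk0|hk0] := boolP (k <= 0); first by rewrite S1.
  have [hkn|hkn] := boolP (k <= n%:Z).
  + have [a ea] : exists a : nat, k = a%:Z by exists `|k|%N; lia.
    subst k; rewrite S2; [apply: allq|]; lia.
  + rewrite S3; [exact: im2|lia].
- have hi : (seq.index z q <= n)%N by have := index_mem z q; rewrite zin /= ltnS.
  exists (seq.index z q)%:Z; by rewrite S2 // nth_index.
Qed.
Definition pb (P : Prop) : bool := if excluded_middle_informative P then true else false.
Lemma pbP (P : Prop) : reflect P (pb P).
Proof. rewrite /pb; case: excluded_middle_informative => h; by constructor. Qed.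
Definition invS (T : {set {set Vx}}) : {set {set Vx}} := [set s | pb (in_inv F K V T s)].
Lemma in_invS T s : (s \in invS T) <-> in_inv F K V T s.
Proof. rewrite inE; split; by move/pbP. Qed.
Lemma invS_sub T : invS T \subset T.
Proof. by apply/subsetP => s /in_invS []. Qed.
Lemma image_invS T rho : essential F K V rho -> image_in rho T -> image_in rho (invS T).
Proof. move=> es im k; apply/in_invS; split => //; exists rho; split => //; by exists k. Qed.
Lemma invS_invariant T : Defs.invariant F K V (invS T).
Proof.
move=> s; split; first by case.
move=> /in_invS [sT [rho [es im ex]]]; split; first by apply/in_invS; split => //; exists rho.
exists rho; split => //; exact: image_invS.
Qed.
Lemma pblock_sym s t : partition V K -> s \in K -> t \in mv V s -> s \in mv V t.
Proof.
move=> /and3P [/eqP cov tI _] sK ts.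
rewrite /mv (same_pblock tI ts) mem_pblock cov //.
Qed.

Lemma isolated_invS (M2 N T : {set {set Vx}}) :
  partition V K -> isolated_by F K V M2 N -> T \subset M2 ->
  (forall s t, s \in T -> t \in mv V s -> t \in T) ->
  (forall x p, Defs.fpath K V x p -> all (mem M2) (x :: p) -> x \in T ->
     last x p \in T -> all (mem T) (x :: p)) ->
  isolated_by F K V (invS T) N.
Proof.
move=> part [inv2 clN sub2 mv2 iso2] sT mvT pT.
have sTN : T \subset N := subset_trans sT sub2.
have NK : N \subset K by case: clN.
split => //.
- exact: invS_invariant.
- exact: subset_trans (invS_sub T) sTN.
- move=> s /in_invS hs; apply/subsetP => t ts.
  have sT' : s \in T by case: hs.
  have sK : s \in K by apply: (subsetP NK); apply: (subsetP sTN).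
  have fp : Defs.fpath K V s [:: t; s].
    rewrite /Defs.fpath /= /Fv !inE ts /=; by rewrite (pblock_sym part sK ts).
  have allT : all (mem T) [:: s; t; s] by rewrite /= sT' (mvT s t sT' ts).
  have tin : t \in [:: s; t; s] by rewrite !inE eqxx orbT.
  apply/in_invS; exact: (glue fp allT hs hs tin).
- move=> x p fp allN /in_invS hx /in_invS hy.
  have xT : x \in T by case: hx.
  have yT : last x p \in T by case: hy.
  have allM : all (mem M2) (x :: p) by apply: iso2 => //; apply: (subsetP sT).
  have allT := pT x p fp allM xT yT.
  apply/allP => z zin; apply/in_invS; exact: (glue fp allT hx hy).
Qed.
Lemma path_fc (M C : {set {set Vx}}) :
  (forall s t, s \in C -> t \in M -> t \in Fv K V s -> t \in C) ->
  forall x p, Defs.fpath K V x p -> all (mem M) (x :: p) -> x \in C -> all (mem C) (x :: p).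
Proof.
move=> fc x p; elim: p x => [|a p IH] x /=; first by move=> _ _ ->.
move=> /andP [ax fp] /and3P [xM aM allM] xC.
rewrite xC /=; apply: IH => //=; first by rewrite aM.
exact: fc xC aM ax.
Qed.

Lemma path_fc_last (M C : {set {set Vx}}) :
  (forall s t, s \in C -> t \in M -> t \in Fv K V s -> t \in C) ->
  forall x p, Defs.fpath K V x p -> all (mem M) (x :: p) ->
  forall y, y \in x :: p -> y \in C -> last x p \in C.
Proof.
move=> fc x p; elim: p x => [|a p IH] x /=.
  by move=> _ _ y; rewrite inE => /eqP ->.
move=> /andP [ax fp] /and3P [xM aM allM] y.
rewrite inE => /orP [/eqP -> xC|yin yC].
- apply: (IH a fp _ a) => //=; first by rewrite aM.
  + by rewrite inE eqxx.
  + exact: fc xC aM ax.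
- apply: (IH a fp _ y) => //=; by rewrite aM.
Qed.
Lemma decomp (M2 N C : {set {set Vx}}) :
  partition V K -> isolated_by F K V M2 N -> minimal F K V M2 -> C \subset M2 ->
  (forall s t, s \in C -> t \in M2 -> t \in Fv K V s -> t \in C) ->
  (invS C = M2 \/ invS C = set0) /\ (invS (M2 :\: C) = M2 \/ invS (M2 :\: C) = set0).
Proof.
move=> part iso min sC fc.
have iso' := iso; case: iso' => inv2 clN sub2 mv2 iso2.
have NK : N \subset K by case: clN.
have sD : M2 :\: C \subset M2 := subsetDl M2 C.
have isoC : isolated_by F K V (invS C) N.
  apply: (isolated_invS part iso sC).
  - move=> s t sC' ts; have sM := subsetP sC s sC'.
    apply: fc sC' (subsetP (mv2 s sM) t ts) _; by rewrite /Fv inE ts.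
  - move=> x p fp allM xC _; exact (path_fc fc fp allM xC).
have isoD : isolated_by F K V (invS (M2 :\: C)) N.
  apply: (isolated_invS part iso sD).
  - move=> s t; rewrite !inE => /andP [sC' sM] ts.
    have tM := subsetP (mv2 s sM) t ts; rewrite tM andbT.
    apply/negP => tC; have sK : s \in K := subsetP NK s (subsetP sub2 s sM).
    have h : s \in Fv K V t by rewrite /Fv inE (pblock_sym part sK ts).
    by rewrite (fc t s tC sM h) in sC'.
  - move=> x p fp allM xD yD; apply/allP => z zin.
    have zM : z \in M2 := allP allM z zin; change (z \in M2 :\: C); rewrite inE zM andbT; apply/negP => zC.
    have := path_fc_last fc fp allM zin zC.
    by move: yD; rewrite inE => /andP [/negP h _] /h.
pose M (i : 'I_2) := if val i == 0%N then invS C else invS (M2 :\: C).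
pose lt (i j : 'I_2) := (val i < val j)%N.
have dj : [disjoint invS C & invS (M2 :\: C)].
  rewrite disjoint_subset; apply/subsetP => s /in_invS [h1 _]; rewrite inE.
  apply/negP => /in_invS [h2 _]; move: h2; by rewrite inE h1.
have md : morse_decomposition F K V M2 lt M.
  split.
  - move=> i; exact: ltnn.
  - move=> j i k; exact: ltn_trans.
  - move=> i j; case: i => [[|[|i]] hi] //; case: j => [[|[|j]] hj] //; rewrite /M /=.
    by move=> _; rewrite disjoint_sym.
  - move=> i; rewrite /M /=; case: ifP => _.
    + split; [exact: subset_trans (invS_sub C) sC | by exists N].
    + split; [exact: subset_trans (invS_sub _) sD | by exists N].
  - move=> rho es im.
    case: (classic (exists k, rho k \notin C)) => [[k2 hk2]|allC].
    + case: (classic (exists k, rho k \in C)) => [[k1 hk1]|noneC].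
      * right; exists ord0, (@Ordinal 2 1 isT); split => //.
        -- move=> s al; rewrite /M /=; apply/in_invS.
           apply: (alpha_inv (m:=k2) es _ al) => k hk.
           rewrite inE im andbT; apply/negP => h; move/negP: hk2; apply.
           exact (fwd_closed fc (proj1 es) im hk h).
        -- move=> s om; rewrite /M /=; apply/in_invS.
           apply: (omega_inv (m:=k1) es _ om) => k hk.
           exact (fwd_closed fc (proj1 es) im hk hk1).
      * left; exists (@Ordinal 2 1 isT); rewrite /M /=; apply: image_invS es _ => k.
        rewrite inE im andbT; apply/negP => h; apply: noneC; by exists k.
    + left; exists ord0; rewrite /M /=; apply: image_invS es _ => k.
      apply/negPn/negP => h; apply: allC; by exists k.
have h0 := min 2 lt M md ord0.
have h1 := min 2 lt M md (@Ordinal 2 1 isT).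
rewrite /M /= in h0 h1; by split.
Qed.
End Aux.

Lemma mv_refine (Vx : finType) (K : {set {set Vx}}) (V1 V2 : {set {set {set Vx}}}) u :
  partition V1 K -> partition V2 K -> refines V2 V1 -> u \in K ->
  Fv K V2 u \subset Fv K V1 u.
Proof.
move=> /and3P [/eqP c1 t1 _] /and3P [/eqP c2 t2 _] ref uK.
have uc2 : u \in cover V2 by rewrite c2.
have [B BV1 sub] := ref _ (pblock_mem uc2).
have uB : u \in B by apply: (subsetP sub); rewrite mem_pblock.
rewrite /Fv /mv (def_pblock t1 BV1 uB); exact: setSU.
Qed.

Lemma path_allM (Vx : finType) (M : {set {set Vx}}) (e : rel {set Vx}) :
  (forall u v, e u v -> v \in M) ->
  forall c q, path e c q -> c \in M -> all (mem M) (c :: q).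
Proof.
move=> he c q; elim: q c => [|v q IH] c /=; first by move=> _ ->.
move=> /andP [cv pq] cM; rewrite cM /=; apply: IH => //; exact: he cv.
Qed.
Theorem proposition20 (F : finFieldType) (Vx : finType)
    (K N : {set {set Vx}}) (V1 V2 : {set {set {set Vx}}})
    (M1 M2 : {set {set Vx}}) :
  is_complex K -> is_closed K N ->
  mvf K V1 -> mvf K V2 -> refines V2 V1 ->
  isolated_by F K V1 M1 N ->
  isolated_by F K V2 M2 N -> minimal F K V2 M2 ->
  M1 :&: M2 != set0 ->
  M2 \subset M1.
Proof.
move=> cK clN [part1 _] [part2 _] ref iso1 iso2 min ne.
have [a] := set0Pn _ ne; rewrite inE => /andP [aM1 aM2].
case: (iso2) => inv2 _ sub2 mv2 isop2.
case: (iso1) => _ _ _ _ isop1.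
have NK : N \subset K by case: clN.
pose e := [rel u v | [&& u \in M2, v \in M2 & v \in Fv K V2 u]].
pose A := M1 :&: M2.
pose U := [set s in M2 | [exists b in A, connect e b s]].
pose D := [set s in M2 | [exists b in A, connect e s b]].
have inU : forall s, (s \in U) = (s \in M2) && [exists b in A, connect e b s] by move=> s; rewrite inE.
have inD : forall s, (s \in D) = (s \in M2) && [exists b in A, connect e s b] by move=> s; rewrite inE.
have aA : a \in A by rewrite inE aM1 aM2.
have fcU : forall s t, s \in U -> t \in M2 -> t \in Fv K V2 s -> t \in U.
  move=> s t; rewrite !inU => /andP [sM /existsP [b /andP [bA bs]]] tM ts.
  rewrite tM /=; apply/existsP; exists b; rewrite bA /=.
  apply: connect_trans bs (connect1 _); by rewrite /= sM tM.
have fcD : forall s t, s \in M2 :\: D -> t \in M2 -> t \in Fv K V2 s -> t \in M2 :\: D.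
  move=> s t; rewrite !in_setD !inD => /andP [sD sM] tM ts; rewrite tM /= andbT.
  rewrite sM /= in sD.
  apply/negP => /existsP [b /andP [bA tb]]; move/negP: sD; apply; apply/existsP; exists b; rewrite bA /=.
  apply: connect_trans (connect1 _) tb; by rewrite /= sM tM.
have sU : U \subset M2 by apply/subsetP => s; rewrite inU => /andP [].
have sD' : M2 :\: D \subset M2 := subsetDl M2 D.
have [_ [hU|hU]] := decomp part2 iso2 min sU fcU.
  have : a \in invS F K V2 (M2 :\: U) by rewrite hU.
  move/in_invS => [h _]; move: h; rewrite in_setD inU aM2 /= andbT negbK => /existsP [].
  by exists a; rewrite aA connect0.
have allU : forall s, s \in M2 -> s \in U.
  move=> s sM; apply: contraT => sU'.
  have [_ [rho [es im [i ei]]]] := (inv2 s).2 sM.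
  have [s' al] := alpha_exists rho.
  have : s' \in invS F K V2 (M2 :\: U).
    apply/in_invS; apply: (alpha_inv (m:=i) es _ al) => k hk.
    rewrite in_setD im andbT; apply/negP => h; move/negP: sU'; apply; rewrite -ei.
    exact (fwd_closed fcU (proj1 es) im hk h).
  by rewrite hU inE.
have [[hD|hD] _] := decomp part2 iso2 min sD' fcD.
  have : a \in invS F K V2 (M2 :\: D) by rewrite hD.
  move/in_invS => [h _]; move: h; rewrite in_setD inD aM2 /= andbT => /negP [].
  by apply/existsP; exists a; rewrite aA connect0.
have allD : forall s, s \in M2 -> s \in D.
  move=> s sM; apply: contraT => sD''.
  have sMD : s \in M2 :\: D by rewrite in_setD sD'' sM.
  have [_ [rho [es im [i ei]]]] := (inv2 s).2 sM.
  have [s' om] := omega_exists rho.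
  have : s' \in invS F K V2 (M2 :\: D).
    apply/in_invS; apply: (omega_inv (m:=i) es _ om) => k hk.
    rewrite -ei in sMD; exact (fwd_closed fcD (proj1 es) im hk sMD).
  by rewrite hD inE.
apply/subsetP => s sM.
have := allU s sM; have := allD s sM.
rewrite inU inD sM /= => /existsP [b /andP [bA sb]] /existsP [c /andP [cA cs]].
have [p pth es] := connectP cs.
have [p2 pth2 eb] := connectP sb.
have pc : path e c (p ++ p2) by rewrite cat_path pth -es pth2.
have lc : last c (p ++ p2) = b by rewrite last_cat -es.
have cM2 : c \in M2 by move: cA; rewrite inE => /andP [].
have eM : forall u v, e u v -> v \in M2 by move=> u v /and3P [].
have allM : all (mem M2) (c :: p ++ p2) := path_allM eM pc cM2.
have fpV1 : Defs.fpath K V1 c (p ++ p2).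
  rewrite /Defs.fpath; apply: (sub_path _ pc) => u v /and3P [uM vM uv].
  have uK : u \in K := subsetP NK u (subsetP sub2 u uM).
  exact: (subsetP (mv_refine part1 part2 ref uK)).
have allN : all (mem N) (c :: p ++ p2).
  apply/allP => z /(allP allM) zM; exact: (subsetP sub2).
have cM1 : c \in M1 by move: cA; rewrite inE => /andP [].
have bM1 : last c (p ++ p2) \in M1 by rewrite lc; move: bA; rewrite inE => /andP [].
have all1 := isop1 c (p ++ p2) fpV1 allN cM1 bM1.
apply: (allP all1); rewrite es.
by rewrite -cat_cons mem_cat mem_last.
Qed.
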